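(* Let $G$ be a finite group and $p$ a prime. Let $\mathcal P(G,1)$ be the number of elements of $G$ of order divisible by $p$, and let $\mathbf 1_G$ denote the trivial $\mathbb{Z}_p[G]$-lattice. Then $$v_p(C_{\theta_G}(\mathbf 1_G))=-v_p(|G|)+\frac{1}{|G|}\sum_{g\in G}v_p(|g|)+\frac{\mathcal P(G,1)}{|G|(p-1)},$$ where $|g|$ denotes the order of $g$.
   Context: Artin relation: there are unique $\alpha_H\in\mathbb{Q}$, for $H$ running over representatives of conjugacy classes of cyclic subgroups of $G$, with $[\mathbf 1]=\sum_H\alpha_H[\mathbb{Q}[G/H]]$ in the rational representation ring tensored with $\mathbb{Q}$. The Artin relation is $\theta_G=[G]-\sum_H\alpha_H[H]$, a formal $\mathbb{Q}$-combination of symbols $[H]$ (standing for the $G$-sets $G/H$). For such a combination $\theta=\sum_K\beta_K[K]$ that is a rational Brauer relation, the regulator constant of the trivial module satisfies $$v_p(C_\theta(\mathbf 1_G))=-\sum_K\beta_K\,v_p(|K|).$$ This is the general regulator constant $\prod_i\det(\tfrac1{|H_i|}\langle\ ,\ \rangle|_{M^{H_i}})/\prod_j\det(\tfrac1{|H'_j|}\langle\ ,\ \rangle|_{M^{H'_j}})$ for an integral relation $\sum_i[H_i]-\sum_j[H'_j]$, evaluated at $M=\mathbb{Z}_p$ with form $\langle x,y\rangle=xy$, and extended linearly to rational relations. *)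

(* Defs.v *)
From HB Require Import structures.
From mathcomp Require Import all_boot all_order all_algebra all_fingroup all_solvable.
Set Implicit Arguments. Unset Strict Implicit. Unset Printing Implicit Defensive.
Import GRing.Theory Num.Theory.
Local Open Scope ring_scope.

Section ArtinDefs.
Variable gT : finGroupType.

(* Character of the permutation representation Q[G/H] at g:
   number of left cosets xH of H in G fixed by left multiplication by g. *)
Definition perm_char (G H : {set gT}) (g : gT) : nat :=
  #|[set C in lcosets H G | (g *: C)%g == C]|.

Definition cyclic_class_reps (G : {group gT}) (reps : {set {set gT}}) : Prop :=
  [/\ (forall K, K \in reps -> [&& group_set K, K \subset G & cyclic K]),
      (forall H : {group gT}, H \subset G -> cyclic H ->
         exists2 K, K \in reps & exists2 x, x \in G & (H :=: K :^ x)%g) &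
      (forall K1 K2 x, K1 \in reps -> K2 \in reps -> x \in G ->
         K1 = (K2 :^ x)%g -> K1 = K2)].

(* alpha gives the coefficients of the Artin relation:
   [1] = sum_H alpha_H [Q[G/H]] in R_Q(G) (x) Q, i.e. equality of characters. *)
Definition artin_coeffs (G : {group gT}) (reps : {set {set gT}})
    (alpha : {set gT} -> rat) : Prop :=
  cyclic_class_reps G reps /\
  forall g, g \in G ->
    (1 : rat) = \sum_(H in reps) alpha H * (perm_char G H g)%:R.

(* The Artin relation theta_G = [G] - sum_H alpha_H [H], as a formal
   Q-combination of subgroups (coefficient function). *)
Definition artin_relation (G : {group gT}) (reps : {set {set gT}})
    (alpha : {set gT} -> rat) : {set gT} -> rat :=
  fun K => ((K == G :> {set gT})%:R - (K \in reps)%:R * alpha K)%R.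

(* v_p(C_theta(1_G)) = - sum_K beta_K v_p(|K|) for theta = sum_K beta_K [K]. *)
Definition vp_regconst_trivial (p : nat) (beta : {set gT} -> rat) : rat :=
  (- \sum_(K : {set gT}) beta K * (logn p #|K|)%:R)%R.

Definition calP (G : {set gT}) (p : nat) : nat :=
  #|[set g in G | (p %| #[g]%g)%N]|.

End ArtinDefs.

(* Main.v *)
Require Import Defs.
From HB Require Import structures.
From mathcomp Require Import all_boot all_order all_algebra all_fingroup all_solvable.
From mathcomp Require Import ring zify.
Import GRing.Theory Num.Theory.
Local Open Scope ring_scope.

Lemma countdvd d n : (d %| n)%N -> (\sum_(i < n) (d %| i) = n %/ d)%N.
Proof.
move=> dn; rewrite (divn_count_dvd d n) -(big_mkord xpredT (fun i => (d %| i) : nat)).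
have e1 := @big_nat_recr _ 0 addn n 0 (fun i => (d %| i) : nat) (leq0n n).
have e2 := @big_ltn _ 0 addn 0 n.+1 (fun i => (d %| i) : nat) (ltn0Sn n).
rewrite dn dvdn0 /= in e1 e2.
by apply/eqP; rewrite -(eqn_add2r 1) -e1 e2 addnC.
Qed.

Lemma sum_lt A T : (\sum_(c < A) (c < T) = minn A T)%N.
Proof.
elim: A => [|A IH]; first by rewrite big_ord0 min0n.
rewrite big_ord_recr /= IH; case: ltnP => h /=; lia.
Qed.

Lemma dvd_logn p o : prime p -> (0 < o)%N -> (p %| o)%N = (0 < logn p o)%N.
Proof. by move=> pp o0; rewrite logn_gt0 mem_primes pp o0. Qed.

Lemma telesc p n k : prime p -> (p ^ k %| n)%N ->
  (\sum_(c < k) (n %/ p ^ c.+1) * (p - 1) + n %/ p ^ k = n)%N.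
Proof.
move=> pp; elim: k => [|k IH] hk; first by rewrite big_ord0 expn0 divn1.
have hk' : (p ^ k %| n)%N := dvdn_trans (dvdn_exp2l p (leqnSn k)) hk.
rewrite big_ord_recr /= -addnA.
suff -> : (n %/ p ^ k.+1 * (p - 1) + n %/ p ^ k.+1 = n %/ p ^ k)%N by exact: IH.
case/dvdnP: hk => q ->.
have p0 : (0 < p)%N := prime_gt0 pp.
have pk0 : (0 < p ^ k.+1)%N by rewrite expn_gt0 p0.
have pk0' : (0 < p ^ k)%N by rewrite expn_gt0 p0.
rewrite mulnK // expnS mulnA mulnK //.
by rewrite mulnBr muln1 subnK // leq_pmulr.
Qed.


Definition w {gT : finGroupType} p (g : gT) : rat :=
  (logn p #[g]%g)%:R + (p %| #[g]%g)%N%:R / (p%:R - 1).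

Lemma sum_cycle (gT : finGroupType) (F : gT -> rat) (a : gT) :
  \sum_(h in <[a]>%g) F h = \sum_(i < #[a]%g) F (a ^+ i)%g.
Proof.
have -> : <[a]>%g = [set (a ^+ (nat_of_ord i))%g | i : 'I_#[a]%g].
  apply/setP => h; apply/idP/imsetP.
    by case/cyclePmin => i ilt ->; exists (Ordinal ilt).
  by case=> i _ ->; exact: mem_cycle.
rewrite big_imset /=; last by move=> i j _ _ /eqP; rewrite eq_expg_ord // => /eqP.
by apply: eq_bigl => i; rewrite inE.
Qed.

Lemma sumw_cycle (gT : finGroupType) p (a : gT) : prime p ->
  \sum_(h in <[a]>%g) w p h = (#[a]%g)%:R * (logn p #[a]%g)%:R.
Proof.
move=> pp; rewrite sum_cycle.
set n := #[a]%g. have n0 : (0 < n)%N := order_gt0 a.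
set A := logn p n.
have key : forall i : 'I_n, w p (a ^+ i)%g =
   (A%:R - (\sum_(c < A) (p ^ c.+1 %| i))%N%:R) + (1 - (p ^ A %| i)%N%:R) / (p%:R - 1).
  move=> i; rewrite /w orderXgcd -/n.
  set g := gcdn n i.
  have g0 : (0 < g)%N by rewrite gcdn_gt0 n0.
  have gn : (g %| n)%N := dvdn_gcdl n i.
  have TA : (logn p g <= A)%N := dvdn_leq_log p n0 gn.
  have hT : (\sum_(c < A) (p ^ c.+1 %| i) = logn p g)%N.
    transitivity (\sum_(c < A) (c < logn p g))%N; last first.
      by rewrite sum_lt; apply/minn_idPr.
    apply: eq_bigr => c _.
    rewrite -(pfactor_dvdn _ _ g0) // /g dvdn_gcd.
    by rewrite (pfactor_dvdn _ _ n0) // ltn_ord.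
  have hA : (p ^ A %| i)%N = (A <= logn p g)%N.
    by rewrite -(pfactor_dvdn _ _ g0) // /g dvdn_gcd pfactor_dvdnn.
  have o0 : (0 < n %/ g)%N by rewrite divn_gt0 // dvdn_leq.
  rewrite (dvd_logn _ _ pp o0) logn_div // hT hA -/A subn_gt0.
  rewrite natrB //.
  by case: leqP => h /=; rewrite ?subrr ?mul0r ?subr0.
rewrite (eq_bigr _ (fun i _ => key i)) big_split /= sumrB -mulr_suml sumrB.
rewrite sumr_const card_ord -natr_sum.
rewrite exchange_big /=.
rewrite (eq_bigr (fun c : 'I_A => n %/ p ^ c.+1)%N); last first.
  by move=> c _; rewrite countdvd // (pfactor_dvdn _ _ n0) // ltn_ord.
rewrite -natr_sum countdvd ?pfactor_dvdnn // sumr_const card_ord.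
have := telesc _ _ _ pp (pfactor_dvdnn p n).
rewrite -/A -big_distrl /=.
set X := (\sum_(c < A) n %/ p ^ c.+1)%N.
set Y := (n %/ p ^ A)%N.
move=> /(congr1 (fun m : nat => m%:R : rat)).
rewrite natrD natrM natrB ?prime_gt0 // => e.
have p1 : (p%:R - 1 : rat) != 0.
  by rewrite subr_eq0 pnatr_eq1; case: eqP (prime_gt1 pp) => // ->.
have -> : (1 : rat) *+ n - Y%:R = X%:R * (p%:R - 1).
  by rewrite -e mulr1n addrK.
rewrite mulfK // -mulr_natr; ring.
Qed.


Lemma card_cond (T : finType) (A : {pred T}) (P : pred T) :
  (#|[set x in A | P x]|%:R : rat) = \sum_(x in A) (P x)%:R.
Proof.
rewrite -sum1_card natr_sum big_mkcond [RHS]big_mkcond.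
by apply: eq_bigr => x _; rewrite inE; case: (x \in A); case: (P x).
Qed.

Lemma stepA (gT : finGroupType) (G : {group gT}) (a : gT) p : prime p ->
  a \in G ->
  \sum_(g in G) w p g * (perm_char G <[a]>%g g)%:R = #|G|%:R * (logn p #[a]%g)%:R.
Proof.
move=> pp aG.
have sHG : (<[a]> \subset G)%g by rewrite cycle_subG.
rewrite /perm_char.
under eq_bigr => g _ do rewrite card_cond mulr_sumr.
rewrite exchange_big /=.
have inner : forall C, C \in lcosets <[a]>%g G ->
   \sum_(g in G) w p g * (((g *: C)%g == C))%:R = (#[a]%g)%:R * (logn p #[a]%g)%:R.
  move=> C /lcosetsP [x xG ->].
  transitivity (\sum_(g in G) w p g * ((g ^ x)%g \in <[a]>%g)%:R).
    apply: eq_bigr => g _; congr (_ * _%:R).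
    by rewrite -lcosetM (sameP eqP lcoset_eqP) mem_lcoset conjgE mulgA.
  rewrite (reindex_inj (conjg_inj (x^-1)%g)) /=.
  transitivity (\sum_(y in G | y \in <[a]>%g) w p y).
    rewrite big_mkcondr /=; apply: eq_big => y.
      by rewrite groupJr // groupV.
    move=> _; rewrite conjgKV /w orderJ.
    by case: (y \in _); rewrite ?mulr1 ?mulr0.
  rewrite -sumw_cycle //; apply: eq_bigl => y.
  by apply/andb_idl => yH; apply: (subsetP sHG).
rewrite (eq_bigr _ inner) sumr_const card_lcosets.
rewrite -(Lagrange sHG) natrM -orderE -mulr_natr; ring.
Qed.


Theorem lemma5p8 (gT : finGroupType) (G : {group gT}) (p : nat)
    (reps : {set {set gT}}) (alpha : {set gT} -> rat) :
  prime p -> artin_coeffs G reps alpha ->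
  vp_regconst_trivial p (artin_relation G reps alpha) =
    - (logn p #|G|)%:R
    + (\sum_(g in G) ((logn p #[g]%g)%:R : rat)) / (#|G|)%:R
    + (calP G p)%:R / ((#|G|)%:R * (p%:R - 1)).
Proof.
move=> pp [[repsP _ _] art].
have key : \sum_(H in reps) alpha H * (logn p #|H|)%:R * #|G|%:R
           = \sum_(g in G) w p g.
  transitivity (\sum_(g in G) w p g *
                  \sum_(H in reps) alpha H * (perm_char G H g)%:R); last first.
    by apply: eq_bigr => g gG; rewrite -art // mulr1.
  under [RHS]eq_bigr => g _ do rewrite mulr_sumr.
  rewrite exchange_big /=; apply: eq_bigr => H HR.
  have /and3P [_ sHG cH] := repsP H HR.
  case/cyclicP: cH => a Ha; rewrite Ha.
  have aG : a \in G by rewrite -cycle_subG -Ha.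
  under eq_bigr => g _ do rewrite mulrCA.
  by rewrite -mulr_sumr stepA // -orderE; ring.
rewrite /vp_regconst_trivial /artin_relation.
under eq_bigr => K _ do rewrite mulrBl.
rewrite sumrB (bigD1 (G : {set gT})) //= eqxx mul1r big1 ?addr0; last first.
  by move=> K /negbTE ->; rewrite mul0r.
have e2 : \sum_(K : {set gT}) (K \in reps)%:R * alpha K * (logn p #|K|)%:R
        = \sum_(K in reps) alpha K * (logn p #|K|)%:R.
  rewrite [RHS]big_mkcond; apply: eq_bigr => K _.
  by case: (K \in reps); rewrite ?mul1r ?mul0r.
rewrite e2.
set X := \sum_(K in reps) _.
rewrite /w big_split /= -mulr_suml in key.
rewrite /calP card_cond.
set S1 := \sum_(g in G) (logn p #[g]%g)%:R.
set S2 := \sum_(x in G) _.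
have G0 : (#|G|%:R : rat) != 0 by rewrite pnatr_eq0 -lt0n cardG_gt0.
have p1 : (p%:R - 1 : rat) != 0.
  by rewrite subr_eq0 pnatr_eq1; case: eqP (prime_gt1 pp) => // ->.
have hk : X * #|G|%:R = S1 + S2 / (p%:R - 1) by rewrite /X key /S2 mulr_suml.
have -> : X = (S1 + S2 / (p%:R - 1)) / #|G|%:R by rewrite -hk mulfK.
field.
by rewrite G0 p1.
Qed.
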